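(* Let $d\in\{2,3\}$, $k\ge 2$, and let $\mathcal P=\{p_1,\dots,p_k\}$ be distinct points in $\mathbb R^d$. For $x\notin\mathcal P$ let $u_i(x)=\frac{p_i-x}{\|p_i-x\|}$, and for $x\notin\mathcal P$ with $\sum_{i=1}^k u_i(x)\neq0$ let $v(x)=\frac{\sum_{i=1}^k u_i(x)}{\|\sum_{i=1}^k u_i(x)\|}$. Let $S(x)=\sum_{1\le i<j\le k}u_i(x)^\top u_j(x)$ be the sum of the cosines of the pairwise angles between the bearings. Then at every such $x$, the directional derivative of $S$ in the direction $v(x)$ satisfies $\nabla S(x)^\top v(x)\le 0$, with strict inequality unless $x$ and all points of $\mathcal P$ lie on a common line. In other words, moving in the direction $v$ decreases the sum of the cosines of the pairwise angles between the bearings $u_i$.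
   Context: $u_i(x)$ is the bearing (unit direction) from the position $x$ to the landmark $p_i$. The points with $\sum_i u_i(x)=0$ (outside $\mathcal P$) are geometric medians of $\mathcal P$. *)

(* Defs.v *)
From HB Require Import structures.
From mathcomp Require Import all_boot all_order all_algebra.
From mathcomp Require Import all_classical all_reals all_analysis.
Set Implicit Arguments. Unset Strict Implicit. Unset Printing Implicit Defensive.
Import Order.TTheory GRing.Theory Num.Theory.
Import numFieldNormedType.Exports.
Local Open Scope ring_scope.

(* Euclidean inner product and norm on R^d (the library's norm on matrices
   is the max-norm, so we define the Euclidean one explicitly). *)
Definition dotp {R : realType} {d : nat} (a b : 'rV[R]_d) : R :=
  \sum_(i < d) a 0 i * b 0 i.

Definition enorm {R : realType} {d : nat} (a : 'rV[R]_d) : R :=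
  Num.sqrt (dotp a a).

Definition bearing {R : realType} {d k : nat} (p : 'I_k -> 'rV[R]_d)
  (i : 'I_k) (x : 'rV[R]_d) : 'rV[R]_d :=
  (enorm (p i - x))^-1 *: (p i - x).

Definition sum_bearings {R : realType} {d k : nat} (p : 'I_k -> 'rV[R]_d)
  (x : 'rV[R]_d) : 'rV[R]_d := \sum_(i < k) bearing p i x.

Definition vdir {R : realType} {d k : nat} (p : 'I_k -> 'rV[R]_d)
  (x : 'rV[R]_d) : 'rV[R]_d :=
  (enorm (sum_bearings p x))^-1 *: sum_bearings p x.

Definition Scos {R : realType} {d k : nat} (p : 'I_k -> 'rV[R]_d)
  (x : 'rV[R]_d) : R :=
  \sum_(i < k) \sum_(j < k | (i < j)%N) dotp (bearing p i x) (bearing p j x).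

Definition collinear_with {R : realType} {d k : nat} (p : 'I_k -> 'rV[R]_d)
  (x : 'rV[R]_d) : Prop :=
  exists (a b : 'rV[R]_d), b != 0 /\ (exists t : R, x = a + t *: b) /\
    (forall i, exists t : R, p i = a + t *: b).

(* Main.v *)
Require Import Defs.
From HB Require Import structures.
From mathcomp Require Import all_boot all_order all_algebra.
From mathcomp Require Import all_classical all_reals all_analysis.
Import Order.TTheory GRing.Theory Num.Theory.
Import numFieldNormedType.Exports.
Local Open Scope ring_scope.
From mathcomp Require Import ring lra.
Section Calc.
Variables (R : realType) (d : nat).
Implicit Types (f g : 'rV[R]_d -> R).

Lemma D_coord l (x w : 'rV[R]_d) : 'D_w (fun y : 'rV[R]_d => y 0 l) x = w 0 l.
Proof.
rewrite /derive; apply/lim_near_cst => //=.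
near=> h.
have hN0 : h != 0 by near: h; exact: nbhs_dnbhs_neq.
rewrite !mxE addrK; rewrite /GRing.scale /= mulKf.
Unshelve. all: by end_near. Qed.

Lemma D_sqrt f x w : differentiable f x -> 0 < f x ->
  'D_w (fun y => Num.sqrt (f y)) x = 'D_w f x / (2 * Num.sqrt (f x)).
Proof.
move=> df fx0.
have dg : differentiable (@Num.sqrt R) (f x).
  have [h1 _] := is_derive1_sqrt fx0. exact/derivable1_diffP.
rewrite (deriveE w (differentiable_comp df dg)) diff_comp //= diff1E //.
by rewrite derive1E derive_sqrt // deriveE.
Qed.

Lemma diff_sqrt f x : differentiable f x -> 0 < f x ->
  differentiable (fun y => Num.sqrt (f y)) x.
Proof.
move=> df fx0.
have dg : differentiable (@Num.sqrt R) (f x).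
  have [h1 _] := is_derive1_sqrt fx0. exact/derivable1_diffP.
exact: (differentiable_comp df dg).
Qed.

Lemma diff_bsum n (F : 'I_n -> 'rV[R]_d -> R) x :
  (forall i, differentiable (F i) x) -> differentiable (fun y => \sum_(i < n) F i y) x.
Proof. move=> H; rewrite -fct_sumE; exact: differentiable_sum. Qed.

Lemma D_bsum n (F : 'I_n -> 'rV[R]_d -> R) x w :
  (forall i, differentiable (F i) x) -> 'D_w (fun y => \sum_(i < n) F i y) x = \sum_(i < n) 'D_w (F i) x.
Proof. move=> H; rewrite -fct_sumE derive_sum // => i; exact: diff_derivable. Qed.

Lemma diff_bsumP n (P : pred 'I_n) (F : 'I_n -> 'rV[R]_d -> R) x :
  (forall i, differentiable (F i) x) ->
  differentiable (fun y => \sum_(i < n | P i) F i y) x.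
Proof.
move=> H; rewrite (_ : (fun y => _) = (fun y => \sum_(i < n) (if P i then F i y else 0))).
  apply: diff_bsum => i; case: (P i); first exact: H.
  exact: (differentiable_cst (0 : R)).
by apply/funext => y; rewrite big_mkcond.
Qed.

Lemma D_bsumP n (P : pred 'I_n) (F : 'I_n -> 'rV[R]_d -> R) x w :
  (forall i, differentiable (F i) x) ->
  'D_w (fun y => \sum_(i < n | P i) F i y) x = \sum_(i < n | P i) 'D_w (F i) x.
Proof.
move=> H; rewrite (_ : (fun y => _) = (fun y => \sum_(i < n) (if P i then F i y else 0))).
  rewrite D_bsum; last first.
    move=> i; case: (P i); first exact: H.
    exact: (differentiable_cst (0 : R)).
  rewrite [RHS]big_mkcond; apply: eq_bigr => i _; case: (P i) => //.
  exact: (derive_cst (0 : R)).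
by apply/funext => y; rewrite big_mkcond.
Qed.

End Calc.

Lemma swap_lt (R : realType) k (G : 'I_k -> 'I_k -> R) :
  \sum_(i < k) \sum_(j < k | (i < j)%N) G i j = \sum_(i < k) \sum_(j < k | (j < i)%N) G j i.
Proof.
under eq_bigr do rewrite big_mkcond.
rewrite exchange_big; apply: eq_bigr => i _.
by rewrite [RHS]big_mkcond.
Qed.

Lemma sym_sum (R : realType) k (F : 'I_k -> 'I_k -> R) :
  \sum_(i < k) \sum_(j < k | (i < j)%N) (F j i + F i j) =
  \sum_(i < k) \sum_(j < k) F i j - \sum_(i < k) F i i.
Proof.
under eq_bigr do rewrite big_split.
rewrite big_split /= swap_lt.
apply/eqP; rewrite eq_sym subr_eq -big_split /= -big_split /=; apply/eqP.
apply: eq_bigr => i _.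
have E1 : \sum_(j < k) F i j = \sum_(j < k | (i < j)%N) F i j + \sum_(j < k | ~~ (i < j)%N) F i j.
  exact: bigID.
have E2 : \sum_(j < k | ~~ (i < j)%N) F i j = \sum_(j < k | (j < i)%N) F i j + F i i.
  rewrite (bigID (fun j : 'I_k => (j < i)%N)) /=; congr (_ + _).
    by apply: eq_bigl => j; case: (ltngtP i j).
  apply: big_pred1 => j /=; case: (ltngtP i j) => //= h.
  - by apply/esym/eqP => hh; move: h; rewrite hh ltnn.
  - by apply/esym/eqP => hh; move: h; rewrite hh ltnn.
  - by rewrite (val_inj h) eqxx.
rewrite E1 E2; lra.
Qed.

Set Implicit Arguments.
Unset Strict Implicit.
Section Main.
Variables (R : realType) (d k : nat) (p : 'I_k -> 'rV[R]_d) (x : 'rV[R]_d).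

Definition Af (i : 'I_k) (l : 'I_d) (y : 'rV[R]_d) := p i 0 l - y 0 l.
Definition Nf i (y : 'rV[R]_d) := \sum_(l < d) Af i l y * Af i l y.
Definition rf i (y : 'rV[R]_d) := Num.sqrt (Nf i y).
Definition Bf i l (y : 'rV[R]_d) := (rf i y)^-1 * Af i l y.
Definition Sf (y : 'rV[R]_d) :=
  \sum_(i < k) \sum_(j < k | (i < j)%N) \sum_(l < d) Bf i l y * Bf j l y.

Lemma bearingE i l y : bearing p i y 0 l = Bf i l y.
Proof.
rewrite /bearing /Bf /rf /Nf /Af /enorm /dotp !mxE.
by under eq_bigr do rewrite !mxE.
Qed.

Lemma Scos_Sf : Scos p = Sf.
Proof.
apply/funext => y; rewrite /Scos /Sf; apply: eq_bigr => i _; apply: eq_bigr => j _.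
by rewrite /dotp; apply: eq_bigr => l _; rewrite !bearingE.
Qed.

Lemma dot0 (a : 'rV[R]_d) : \sum_(l < d) a 0 l * a 0 l = 0 -> a = 0.
Proof.
move=> H; apply/matrixP => i l; rewrite (ord1 i) mxE.
have nn : forall j : 'I_d, true -> 0 <= a 0 j * a 0 j.
  by move=> j _; rewrite -expr2 sqr_ge0.
have /eqP := psumr_eq0P nn H (i:=l) isT.
by rewrite mulf_eq0 orbb => /eqP.
Qed.

Hypothesis hx : forall i, x != p i.

Lemma N_gt0 i : 0 < Nf i x.
Proof.
rewrite lt_def sumr_ge0 ?andbT; last by move=> l _; rewrite -expr2 sqr_ge0.
apply/negP => /eqP H.
have : p i - x = 0.
  apply: dot0; rewrite -[X in _ = X]H /Nf; apply: eq_bigr => l _; by rewrite !mxE.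
by move/eqP; rewrite subr_eq0 eq_sym (negbTE (hx i)).
Qed.

Lemma r_gt0 i : 0 < rf i x.
Proof. by rewrite /rf sqrtr_gt0 N_gt0. Qed.

Lemma dA i l y : differentiable (Af i l) y.
Proof.
rewrite (_ : Af i l = cst (p i 0 l) - (fun y => y 0 l)); last by [].
apply: differentiableB; [exact: differentiable_cst | exact: differentiable_coord].
Qed.

Lemma DA i l w : 'D_w (Af i l) x = - w 0 l.
Proof.
rewrite (_ : Af i l = cst (p i 0 l) - (fun y => y 0 l)); last by [].
rewrite deriveB; last 2 first.
- exact: derivable_cst.
- exact/diff_derivable/differentiable_coord.
by rewrite derive_cst D_coord sub0r.
Qed.

Lemma dN i : differentiable (Nf i) x.
Proof. apply: diff_bsum => l; apply: differentiableM; exact: dA. Qed.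

Lemma DN i w : 'D_w (Nf i) x = \sum_(l < d) (Af i l x * - w 0 l + Af i l x * - w 0 l).
Proof.
rewrite /Nf D_bsum; last by move=> l; apply: differentiableM; exact: dA.
apply: eq_bigr => l _.
rewrite deriveM; try exact/diff_derivable/dA.
by rewrite DA.
Qed.

Lemma dr i : differentiable (rf i) x.
Proof. apply: diff_sqrt; [exact: dN | exact: N_gt0]. Qed.

Lemma Dr i w : 'D_w (rf i) x = 'D_w (Nf i) x / (2 * rf i x).
Proof. by rewrite /rf D_sqrt //; [exact: dN | exact: N_gt0]. Qed.

Lemma dRinv i : differentiable (fun y => (rf i y)^-1) x.
Proof. apply: differentiableV; [exact: dr | exact/lt0r_neq0/r_gt0]. Qed.

Lemma DRinv i w : 'D_w (fun y => (rf i y)^-1) x = - (rf i x) ^- 2 * 'D_w (rf i) x.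
Proof. rewrite deriveV //; [exact/lt0r_neq0/r_gt0 | exact/diff_derivable/dr]. Qed.

Lemma dB i l : differentiable (Bf i l) x.
Proof. apply: differentiableM; [exact: dRinv | exact: dA]. Qed.

Lemma DB i l w : 'D_w (Bf i l) x =
  (rf i x)^-1 * 'D_w (Af i l) x + Af i l x * 'D_w (fun y => (rf i y)^-1) x.
Proof.
rewrite /Bf deriveM //; [exact/diff_derivable/dRinv | exact/diff_derivable/dA].
Qed.

Lemma dS : differentiable Sf x.
Proof.
apply: diff_bsum => i; apply: diff_bsumP => j.
apply: diff_bsum => l; apply: differentiableM; exact: dB.
Qed.

Lemma DS w : 'D_w Sf x = \sum_(i < k) \sum_(j < k | (i < j)%N) \sum_(l < d)
   (Bf i l x * 'D_w (Bf j l) x + Bf j l x * 'D_w (Bf i l) x).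
Proof.
rewrite /Sf D_bsum; last first.
  move=> i; apply: diff_bsumP => j; apply: diff_bsum => l.
  apply: differentiableM; exact: dB.
apply: eq_bigr => i _; rewrite D_bsumP; last first.
  move=> j; apply: diff_bsum => l; apply: differentiableM; exact: dB.
apply: eq_bigr => j _; rewrite D_bsum; last first.
  move=> l; apply: differentiableM; exact: dB.
apply: eq_bigr => l _; rewrite deriveM //; exact/diff_derivable/dB.
Qed.

Definition cw i (w : 'rV[R]_d) := \sum_(l < d) Bf i l x * w 0 l.

Lemma u_norm i : \sum_(l < d) Bf i l x * Bf i l x = 1.
Proof.
have r0 := r_gt0 i.
rewrite /Bf.
under eq_bigr do rewrite mulrACA.
rewrite -mulr_sumr -/(Nf i x) -invfM.
have -> : Nf i x = rf i x * rf i x by rewrite /rf -expr2 sqr_sqrtr // ltW // N_gt0.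
by rewrite mulVf // mulf_neq0 // lt0r_neq0.
Qed.

Lemma DBE i l w : 'D_w (Bf i l) x = (cw i w * Bf i l x - w 0 l) / rf i x.
Proof.
have r0 := r_gt0 i.
have rn0 : rf i x != 0 by exact: lt0r_neq0.
rewrite DB DRinv Dr DN DA.
have ea : forall l, Af i l x = rf i x * Bf i l x.
  by move=> l'; rewrite /Bf mulrA mulfV // mul1r.
have -> : \sum_(l0 < d) (Af i l0 x * - w 0 l0 + Af i l0 x * - w 0 l0)
   = - 2 * rf i x * cw i w.
  rewrite /cw mulr_sumr; apply: eq_bigr => l' _; rewrite ea; ring.
rewrite ea; field; exact: rn0.
Qed.

Definition Uc l := \sum_(j < k) Bf j l x.
Definition gi i := \sum_(l < d) Bf i l x * Uc l.

Lemma DS_gen w : 'D_w Sf x =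
  \sum_(i < k) (cw i w * gi i - \sum_(l < d) w 0 l * Uc l) / rf i x.
Proof.
pose F i j := \sum_(l < d) 'D_w (Bf i l) x * Bf j l x.
rewrite DS (eq_bigr (fun i : 'I_k => \sum_(j < k | (i < j)%N) (F j i + F i j))); last first.
  move=> i _; apply: eq_bigr => j _; rewrite /F -big_split; apply: eq_bigr => l _.
  by rewrite /= [Bf i l x * _]mulrC [Bf j l x * _]mulrC.
rewrite sym_sum.
have -> : \sum_(i < k) F i i = 0.
  apply: big1 => i _; rewrite /F /=.
  have rn0 : rf i x != 0 by exact/lt0r_neq0/r_gt0.
  transitivity (\sum_(l < d) (cw i w * (Bf i l x * Bf i l x) - Bf i l x * w 0 l) / rf i x).
    by apply: eq_bigr => l _; rewrite DBE; field.
  by rewrite -mulr_suml sumrB -mulr_sumr u_norm -/(cw i w) mulr1 subrr mul0r.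
rewrite subr0; apply: eq_bigr => i _.
rewrite /F /= exchange_big /=.
have rn0 : rf i x != 0 by exact/lt0r_neq0/r_gt0.
transitivity (\sum_(l < d) 'D_w (Bf i l) x * Uc l).
  by apply: eq_bigr => l _; rewrite /Uc mulr_sumr.
transitivity (\sum_(l < d) (cw i w * (Bf i l x * Uc l) - w 0 l * Uc l) / rf i x).
  by apply: eq_bigr => l _; rewrite DBE; field.
by rewrite -mulr_suml sumrB -mulr_sumr.
Qed.

Lemma Q_id i : \sum_(l < d) (Uc l - gi i * Bf i l x) ^+ 2 =
  \sum_(l < d) Uc l * Uc l - gi i ^+ 2.
Proof.
transitivity (\sum_(l < d) (Uc l * Uc l - (2 * gi i) * (Bf i l x * Uc l)
   + gi i ^+ 2 * (Bf i l x * Bf i l x))).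
  by apply: eq_bigr => l _; ring.
rewrite big_split sumrB /= -!mulr_sumr u_norm -/(gi i); ring.
Qed.

End Main.
Unset Implicit Arguments.
Set Strict Implicit.

Theorem theorem1 (R : realType) (d k : nat) (p : 'I_k -> 'rV[R]_d)
  (x : 'rV[R]_d) :
  (d = 2%N \/ d = 3%N) -> (2 <= k)%N -> injective p ->
  (forall i, x != p i) -> sum_bearings p x != 0 ->
  differentiable (Scos p) x /\
  'd (Scos p) x (vdir p x) <= 0 /\
  (~ collinear_with p x -> 'd (Scos p) x (vdir p x) < 0).
Proof.
move=> _ _ _ hx hU.
have dS' : differentiable (Scos p) x by rewrite Scos_Sf; exact: dS.
have UcE : forall l, sum_bearings p x 0 l = Uc p x l.
  move=> l; rewrite /sum_bearings summxE /Uc; apply: eq_bigr => j _.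
  exact: bearingE.
set m := enorm (sum_bearings p x).
have Um : \sum_(l < d) Uc p x l * Uc p x l = m ^+ 2.
  rewrite /m /enorm sqr_sqrtr; last first.
    by apply: sumr_ge0 => l _; rewrite -expr2 sqr_ge0.
  by rewrite /dotp; apply: eq_bigr => l _; rewrite UcE.
have m0 : 0 < m.
  rewrite /m /enorm sqrtr_gt0 lt_def; apply/andP; split; last first.
    by apply: sumr_ge0 => l _; rewrite -expr2 sqr_ge0.
  by apply/negP => /eqP /dot0 H; move: hU; rewrite H eqxx.
have mn0 : m != 0 by exact: lt0r_neq0.
have vE : forall l, vdir p x 0 l = m^-1 * Uc p x l.
  by move=> l; rewrite /vdir mxE UcE.
have key : 'd (Scos p) x (vdir p x) = - \sum_(i < k)
    (\sum_(l < d) (Uc p x l - gi p x i * Bf p i l x) ^+ 2) / (m * rf p i x).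
  rewrite -deriveE // Scos_Sf (DS_gen hx) -[in RHS]sumrN; apply: eq_bigr => i _.
  rewrite (Q_id hx) Um.
  have -> : cw p x i (vdir p x) = m^-1 * gi p x i.
    rewrite /cw /gi mulr_sumr; apply: eq_bigr => l _; rewrite vE; ring.
  have -> : \sum_(l < d) vdir p x 0 l * Uc p x l = m^-1 * m ^+ 2.
    rewrite -Um mulr_sumr; apply: eq_bigr => l _; rewrite vE; ring.
  have rn0 : rf p i x != 0 by exact/lt0r_neq0/(r_gt0 hx).
  by field; rewrite rn0 mn0.
have Tge0 : forall i : 'I_k, 0 <= (\sum_(l < d) (Uc p x l - gi p x i * Bf p i l x) ^+ 2) / (m * rf p i x).
  move=> i; apply: divr_ge0; first by apply: sumr_ge0 => l _; exact: sqr_ge0.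
  by apply: mulr_ge0; [exact: ltW | exact/ltW/(r_gt0 hx)].
split; first exact: dS'.
split; first by rewrite key oppr_le0; apply: sumr_ge0 => i _; exact: Tge0.
move=> ncol; rewrite key oppr_lt0 lt_def sumr_ge0 ?andbT; last by move=> i _; exact: Tge0.
apply/negP => /eqP H0; apply: ncol.
have Hl : forall i l, Uc p x l = gi p x i * Bf p i l x.
  move=> i l.
  have Ti := psumr_eq0P (fun i _ => Tge0 i) H0 (i:=i) isT.
  have rn0 : rf p i x != 0 by exact/lt0r_neq0/(r_gt0 hx).
  move: Ti => /eqP; rewrite mulf_eq0 invr_eq0 mulf_eq0 (negbTE mn0) (negbTE rn0) !orbF.
  move=> /eqP Q0.
  have nn : forall j : 'I_d, true -> 0 <= (Uc p x j - gi p x i * Bf p i j x) ^+ 2.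
    by move=> j _; exact: sqr_ge0.
  have /eqP := psumr_eq0P nn Q0 (i:=l) isT.
  by rewrite sqrf_eq0 subr_eq0 => /eqP.
exists x, (sum_bearings p x); split; first exact: hU.
split; first by exists 0; rewrite scale0r addr0.
move=> i.
have gn0 : gi p x i != 0.
  apply/negP => /eqP g0; move: hU; apply/negP; rewrite negbK; apply/eqP.
  by apply/matrixP => a l; rewrite (ord1 a) UcE (Hl i) g0 mul0r mxE.
have rn0 : rf p i x != 0 by exact/lt0r_neq0/(r_gt0 hx).
exists (rf p i x / gi p x i).
apply/matrixP => a l; rewrite (ord1 a) !mxE UcE (Hl i l) /Bf /Af.
by field; rewrite gn0 rn0.
Qed.
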